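(* Let $\mathbb{K}=\mathbb{R}$ or $\mathbb{C}$, let $V,W$ be finite-dimensional $\mathbb{K}$-vector spaces, and let $A(\xi):V\to W$, $\xi\in\mathbb{K}^d$, be a homogeneous symbol of degree $k$ (a $\operatorname{Lin}(V,W)$-valued map whose matrix entries are homogeneous polynomials of degree $k$ in $\xi$ with coefficients in $\mathbb{K}$). The following are equivalent: (1) there is an integer $r$ such that $\operatorname{rank}_{\mathbb K}A(\xi)=r$ for all $\xi\in\mathbb{K}^d\setminus\{0\}$; (2) there exist finite-dimensional $\mathbb{K}$-vector spaces $U,X$ and homogeneous symbols $B(\xi):U\to V$ and $Q(\xi):W\to X$ on $\mathbb{K}^d$ such that $\operatorname{im}B(\xi)=\ker A(\xi)$ and $\operatorname{im}A(\xi)=\ker Q(\xi)$ for all $\xi\in\mathbb{K}^d\setminus\{0\}$. Moreover, if (1) holds, then in (2) one can always take $B(\xi)$ and $Q(\xi)$ homogeneous of order $rk$. *)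

(* Defs.v *)
From HB Require Import structures.
From mathcomp Require Import all_boot all_order all_algebra.
From mathcomp Require Import mpoly.
From mathcomp Require Import reals.
From mathcomp Require Import complex.

Set Implicit Arguments.
Unset Strict Implicit.
Unset Printing Implicit Defensive.

Import GRing.Theory Num.Theory.
Local Open Scope ring_scope.

(* A symbol xi |-> A(xi) : K^n -> K^m on K^d is an m x n matrix whose
   entries are polynomials in d variables over K.  It acts on column vectors. *)
Definition symbol (K : fieldType) (d m n : nat) := 'M[{mpoly K[d]}]_(m, n).

Definition sym_eval (K : fieldType) (d m n : nat) (A : symbol K d m n)
  (xi : 'rV[K]_d) : 'M[K]_(m, n) :=
  map_mx (fun p : {mpoly K[d]} => p.@[fun i => xi 0 i]) A.

Definition homog_symbol (K : fieldType) (d m n : nat) (k : nat)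
  (A : symbol K d m n) : Prop :=
  forall i j, A i j \is k.-homog.

Definition im_eq_ker (K : fieldType) (p n m : nat)
  (B : 'M[K]_(n, p)) (A : 'M[K]_(m, n)) : Prop :=
  forall v : 'cV[K]_n, A *m v = 0 <-> exists u : 'cV[K]_p, v = B *m u.

Definition constant_rank (K : fieldType) (d m n : nat) (A : symbol K d m n)
  (r : nat) : Prop :=
  forall xi : 'rV[K]_d, xi != 0 -> \rank (sym_eval A xi) = r.

Definition exact_at_nonzero (K : fieldType) (d p n m q : nat)
  (B : symbol K d n p) (A : symbol K d m n) (Q : symbol K d q m) : Prop :=
  forall xi : 'rV[K]_d, xi != 0 ->
    im_eq_ker (sym_eval B xi) (sym_eval A xi) /\
    im_eq_ker (sym_eval A xi) (sym_eval Q xi).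

Definition theorem2p2_over (K : fieldType) : Prop :=
  forall (d n m k : nat) (A : symbol K d m n),
    homog_symbol k A ->
    ((exists r : nat, constant_rank A r) <->
     (exists (p q kB kQ : nat) (B : symbol K d n p) (Q : symbol K d q m),
        homog_symbol kB B /\ homog_symbol kQ Q /\ exact_at_nonzero B A Q))
    /\
    (forall r : nat, constant_rank A r ->
     exists (p q : nat) (B : symbol K d n p) (Q : symbol K d q m),
        homog_symbol (r * k) B /\ homog_symbol (r * k) Q /\
        exact_at_nonzero B A Q).

(* Main.v *)
Require Import Defs.
From HB Require Import structures.
From mathcomp Require Import all_boot all_order all_algebra.
From mathcomp Require Import mpoly.
From mathcomp Require Import reals.
From mathcomp Require Import complex.
From mathcomp Require Import fingroup perm.
From mathcomp Require Import ring zify.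
From Stdlib Require Import Classical.
Set Implicit Arguments.
Unset Strict Implicit.
Unset Printing Implicit Defensive.
Import GRing.Theory Num.Theory.
Local Open Scope ring_scope.

Section Constr.
Variable R : comRingType.

Definition Nmat r m n (A : 'M[R]_(m, n)) (x : 'I_r.+1 -> R)
  (f : {ffun 'I_r -> 'I_m}) (g : {ffun 'I_r.+1 -> 'I_n}) : 'M[R]_r.+1 :=
  \matrix_(a, b) if unlift ord0 a is Some a' then A (f a') (g b) else x b.

Definition kvec r m n (A : 'M[R]_(m, n)) (f : {ffun 'I_r -> 'I_m})
  (g : {ffun 'I_r.+1 -> 'I_n}) : 'cV[R]_n :=
  \col_j \sum_(b < r.+1) (g b == j)%:R * cofactor (Nmat A (fun _ => 0) f g) ord0 b.

Definition Tidx r m n := ({ffun 'I_r -> 'I_m} * {ffun 'I_r.+1 -> 'I_n})%type.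

Definition Bc r m n (A : 'M[R]_(m, n)) : 'M[R]_(n, #|{: Tidx r m n}|) :=
  \matrix_(j, k) kvec A (enum_val k).1 (enum_val k).2 j 0.

Lemma cofactor_Nmat r m n (A : 'M[R]_(m, n)) x y f g b :
  cofactor (Nmat A x f g) ord0 b = cofactor (@Nmat r m n A y f g) ord0 b.
Proof.
rewrite /cofactor; congr (_ * _); congr (\det _).
by apply/matrixP => i j; rewrite !mxE liftK.
Qed.

End Constr.

Section Map.
Variables (R S : comRingType) (phi : {rmorphism R -> S}).

Lemma Bc_map r m n (A : 'M[R]_(m, n)) :
  map_mx phi (Bc r A) = Bc r (map_mx phi A).
Proof.
apply/matrixP => j k; rewrite !mxE rmorph_sum; apply: eq_bigr => b _.
rewrite rmorphM rmorph_nat -cofactor_map_mx; congr (_ * cofactor _ _ _).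
apply/matrixP => i l; rewrite !mxE; case: (unlift _ _) => //.
  by move=> a; rewrite mxE.
by rewrite rmorph0.
Qed.
End Map.

Section Homog.
Variables (K : fieldType) (d k : nat).

Lemma prod_homog r (F : 'I_r -> {mpoly K[d]}) :
  (forall i, F i \is k.-homog) -> \prod_(i < r) F i \is (r * k).-homog.
Proof.
elim: r F => [|r IH] F HF; first by rewrite big_ord0 mul0n dhomog1.
rewrite big_ord_recr /= mulSn addnC; apply: dhomogM; last exact: HF.
by apply: IH.
Qed.

Lemma det_homog r (M : 'M[{mpoly K[d]}]_r) :
  (forall i j, M i j \is k.-homog) -> \det M \is (r * k).-homog.
Proof.
move=> HM; rewrite /determinant; apply: rpred_sum => s _.
have Hp := prod_homog (fun i => HM i (s i)).
by case: (odd_perm s); rewrite ?expr1 ?expr0 ?mulN1r ?mul1r ?rpredN.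
Qed.

Lemma Bc_homog r m n (A : 'M[{mpoly K[d]}]_(m, n)) :
  (forall i j, A i j \is k.-homog) -> forall i j, Bc r A i j \is (r * k).-homog.
Proof.
move=> HA i j; rewrite !mxE; apply: rpred_sum => b _.
rewrite mulr_natl; apply: rpredMn.
rewrite /cofactor -signr_odd; case: (odd _);
  rewrite ?expr1 ?expr0 ?mulN1r ?mul1r ?rpredN; apply: det_homog => a c;
  by rewrite !mxE liftK.
Qed.
End Homog.

Section Field.
Variable K : fieldType.

Lemma mxsub_rank m n m' n' (f : 'I_m' -> 'I_m) (g : 'I_n' -> 'I_n) (A : 'M[K]_(m, n)) :
  (\rank (mxsub f g A) <= \rank A)%N.
Proof.
have -> : mxsub f g A = rowsub f 1%:M *m (A *m colsub g 1%:M).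
  by rewrite mulmx_colsub mulmx1 -rowsubE; apply/matrixP => i j; rewrite !mxE.
by apply: leq_trans (mxrankM_maxr _ _) _; apply: mxrankM_maxl.
Qed.

Lemma minor_exists m n (A : 'M[K]_(m, n)) :
  exists (f : {ffun 'I_(\rank A) -> 'I_m}) (h : {ffun 'I_(\rank A) -> 'I_n}),
    \det (mxsub f h A) != 0.
Proof.
pose f0 := maxrankfun A.
have fr : row_free (rowsub f0 A) := maxrowsub_free A.
have fA : row_full (rowsub f0 A)^T.
  by rewrite /row_full mxrank_tr; move: fr; rewrite /row_free.
exists f0, (fullrankfun fA).
have U := fullrowsub_unit fA.
have -> : mxsub f0 (fullrankfun fA) A = (rowsub (fullrankfun fA) (rowsub f0 A)^T)^T.
  by apply/matrixP => i j; rewrite !mxE.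
by rewrite -unitfE -unitmxE unitmx_tr.
Qed.

Lemma kvec_ker r m n (A : 'M[K]_(m, n)) f g :
  (\rank A <= r)%N -> A *m @kvec K r m n A f g = 0.
Proof.
move=> rA; apply/matrixP => i z; rewrite !mxE.
pose x := fun b : 'I_r.+1 => A i (g b).
transitivity (\sum_(b < r.+1) Nmat A x f g ord0 b * cofactor (Nmat A x f g) ord0 b).
  under eq_bigr do rewrite mxE mulr_sumr.
  rewrite exchange_big /=; apply: eq_bigr => b _.
  rewrite (bigD1 (g b)) //= eqxx mul1r big1 ?addr0.
    by rewrite !mxE unlift_none (cofactor_Nmat A x (fun _ => 0)).
  by move=> j /negPf; rewrite eq_sym => ->; rewrite mul0r mulr0.
rewrite -expand_det_row.
pose f2 := [ffun a => if unlift ord0 a is Some a' then f a' else i].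
have -> : Nmat A x f g = mxsub f2 g A.
  by apply/matrixP => a b; rewrite !mxE ffunE; case: (unlift _ _).
apply/eqP; apply: contraLR rA => H; rewrite -ltnNge.
have U : mxsub f2 g A \in unitmx by rewrite unitmxE unitfE.
by rewrite -{1}(mxrank_unit U); apply: mxsub_rank.
Qed.

Lemma Bc_ker r m n (A : 'M[K]_(m, n)) :
  (\rank A <= r)%N -> A *m Bc r A = 0.
Proof.
move=> rA; apply/matrixP => i k.
move: (kvec_ker (enum_val k).1 (enum_val k).2 rA) => /matrixP /(_ i 0).
rewrite !mxE => E; apply: etrans E.
by apply: eq_bigr => j _; rewrite !mxE.
Qed.


Lemma Bc_span m n (A : 'M[K]_(m, n)) :
  (n <= \rank (Bc (\rank A) A) + \rank A)%N.
Proof.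
have [f [h Hd]] := minor_exists A.
pose E := rowsub h (1%:M : 'M[K]_n).
have key : forall jj : 'I_n, ((delta_mx 0 jj : 'rV[K]_n) <= (Bc (\rank A) A)^T + E)%MS.
  move=> j0.
  pose g : {ffun 'I_(\rank A).+1 -> 'I_n} := [ffun b => if unlift ord0 b is Some b' then h b' else j0].
  pose v := (kvec A f g)^T.
  have vB : (v <= (Bc (\rank A) A)^T)%MS.
    have -> : v = row (enum_rank (f, g)) (Bc (\rank A) A)^T.
      by apply/matrixP => i j; rewrite !mxE enum_rankK.
    exact: row_sub.
  pose c := fun b => cofactor (Nmat A (fun _ => 0) f g) ord0 b.
  have vE : v = c ord0 *: delta_mx 0 j0
              + \sum_(b < \rank A) c (lift ord0 b) *: delta_mx 0 (h b).
    apply/matrixP => i j; rewrite !mxE summxE big_ord_recl ffunE unlift_none.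
    rewrite (ord1 i) eqxx /= mulrC eq_sym; congr (_ + _).
    by apply: eq_bigr => b _; rewrite !mxE ffunE liftK eqxx /= mulrC eq_sym.
  have c0 : c ord0 = \det (mxsub f h A).
    rewrite /c /cofactor add0n expr0 mul1r; congr (\det _).
    by apply/matrixP => a b; rewrite !mxE liftK ffunE liftK.
  have -> : delta_mx 0 j0 = (c ord0)^-1 *: v
      + (- (c ord0)^-1) *: \sum_(b < \rank A) c (lift ord0 b) *: delta_mx 0 (h b).
    by rewrite vE scalerDr scaleNr addrK scalerA mulVf ?scale1r // c0.
  apply: addmx_sub_adds; first exact: scalemx_sub.
  apply: scalemx_sub; apply: summx_sub => b _; apply: scalemx_sub.
  by rewrite -row1 -row_rowsub row_sub.
have S1 : (1%:M <= (Bc (\rank A) A)^T + E)%MS.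
  by apply/row_subP => j; rewrite row1.
have := mxrankS S1; rewrite mxrank1 => H; apply: leq_trans H _.
apply: leq_trans (mxrank_adds_leqif _ _).1 _.
by rewrite mxrank_tr leq_add2l rank_leq_row.
Qed.

Lemma im_ker_crit m n p (A : 'M[K]_(m, n)) (M : 'M[K]_(n, p)) :
  A *m M = 0 -> (n <= \rank M + \rank A)%N -> im_eq_ker M A.
Proof.
move=> AM rk v; split; last by move=> [u ->]; rewrite mulmxA AM mul0mx.
move=> Av.
have s1 : (M^T <= kermx A^T)%MS by rewrite sub_kermx -trmx_mul AM trmx0.
have s2 : (v^T <= kermx A^T)%MS by rewrite sub_kermx -trmx_mul Av trmx0.
have e : (M^T == kermx A^T)%MS.
  rewrite -(geq_leqif (mxrank_leqif_eq s1)) mxrank_ker !mxrank_tr.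
  by rewrite leq_subLR addnC.
have : (v^T <= M^T)%MS by rewrite (eqmxP e).
case/submxP => D HD; exists D^T; by rewrite -[v]trmxK HD trmx_mul trmxK.
Qed.

End Field.

Section Sym.
Variable K : fieldType.

Lemma sym_eval_Bc d r m n (A : symbol K d m n) xi :
  sym_eval (Bc r A) xi = Bc r (sym_eval A xi).
Proof. exact: (Bc_map (meval (fun i => xi 0 i))). Qed.

Lemma sym_eval_tr d m n (A : symbol K d m n) xi :
  sym_eval (A^T : symbol K d n m) xi = (sym_eval A xi)^T.
Proof. by rewrite /sym_eval map_trmx. Qed.

Lemma construct d n m k (A : symbol K d m n) r :
  homog_symbol k A -> constant_rank A r ->
  exists (p q : nat) (B : symbol K d n p) (Q : symbol K d q m),
    homog_symbol (r * k) B /\ homog_symbol (r * k) Q /\ exact_at_nonzero B A Q.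
Proof.
move=> hA cA.
exists _, _, (Bc r A), ((Bc r (A^T : symbol K d n m))^T : symbol K d _ m).
split; first exact: Bc_homog.
split.
  move=> i j; rewrite mxE; apply: Bc_homog => a b; rewrite mxE; exact: hA.
move=> xi xi0; have Hr := cA xi xi0.
idtac.
split.
  rewrite sym_eval_Bc; apply: im_ker_crit.
    by apply: Bc_ker; rewrite Hr.
  by move: (Bc_span (sym_eval A xi)); rewrite Hr.
have -> : sym_eval ((Bc r (A^T : symbol K d n m))^T : symbol K d _ m) xi
   = (Bc r (sym_eval A xi)^T)^T.
  by rewrite sym_eval_tr sym_eval_Bc sym_eval_tr.
apply: im_ker_crit.
  by apply: (can_inj (@trmxK _ _ _)); rewrite trmx_mul trmxK Bc_ker ?trmx0 // mxrank_tr Hr.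
by move: (Bc_span (sym_eval A xi)^T); rewrite !mxrank_tr Hr addnC.
Qed.
End Sym.

Lemma max_exists (T : Type) (F : T -> nat) (t0 : T) N :
  (forall t, (F t <= N)%N) -> exists t1, forall t, (F t <= F t1)%N.
Proof.
elim: N => [|N IH] HF.
  by exists t0 => t; apply: leq_trans (HF t) _.
case: (classic (exists t1, F t1 = N.+1)) => [[t1 Ht1]|Hn].
  by exists t1 => t; rewrite Ht1.
apply: IH => t; have := HF t; rewrite leq_eqVlt ltnS; case/orP => // /eqP E.
by exfalso; apply: Hn; exists t.
Qed.

Section Field.
Variable K : fieldType.

Lemma rank_sum m n q (A : 'M[K]_(m, n)) (Q : 'M[K]_(q, m)) :
  im_eq_ker A Q -> (\rank A + \rank Q)%N = m.
Proof.
move=> H.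
have QA : Q *m A = 0.
  apply/matrixP => i j.
  have := proj2 (H (col j A)) (ex_intro _ (delta_mx j 0) (colE j A)).
  by rewrite colE mulmxA -colE => /matrixP/(_ i 0); rewrite !mxE.
have s1 : (A^T <= kermx Q^T)%MS by rewrite sub_kermx -trmx_mul QA trmx0.
have s2 : (kermx Q^T <= A^T)%MS.
  apply/row_subP => i.
  have : (row i (kermx Q^T) <= kermx Q^T)%MS := row_sub _ _.
  rewrite sub_kermx => /eqP Hw.
  have : Q *m (row i (kermx Q^T))^T = 0 by apply: (can_inj (@trmxK _ _ _)); rewrite trmx_mul trmxK Hw trmx0.
  case/(proj1 (H _)) => u Hu.
  by rewrite -[row _ _]trmxK Hu trmx_mul submxMl.
have e : \rank A^T = \rank (kermx Q^T) by apply/eqmx_rank/andP.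
rewrite -mxrank_tr e mxrank_ker mxrank_tr subnK //; exact: rank_leq_col.
Qed.


Lemma meval_homog d k (p : {mpoly K[d]}) (c : K) (v : 'I_d -> K) :
  p \is k.-homog -> p.@[fun i => c * v i] = c ^+ k * p.@[v].
Proof.
move=> /dhomogP hp; rewrite !mevalE mulr_sumr big_seq [RHS]big_seq.
apply: eq_bigr => mm /hp Hm; rewrite mulrCA; congr (_ * _).
under eq_bigr do rewrite exprMn.
by rewrite big_split /= prodrXr -mdegE Hm.
Qed.

Lemma sym_eval_scale d m n k (A : symbol K d m n) c xi :
  homog_symbol k A -> sym_eval A (c *: xi) = c ^+ k *: sym_eval A xi.
Proof.
move=> hA; apply/matrixP => i j; rewrite !mxE -meval_homog //.
by apply: meval_eq => l; rewrite mxE.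
Qed.

Definition linepoly d (p : {mpoly K[d]}) (v w : 'I_d -> K) : {poly K} :=
  \sum_(mm <- msupp p) (p@_mm)%:P * \prod_i ((v i)%:P + 'X * (w i)%:P) ^+ (mm i).

Lemma linepolyE d (p : {mpoly K[d]}) v w t :
  (linepoly p v w).[t] = p.@[fun i => v i + t * w i].
Proof.
rewrite -horner_evalE rmorph_sum mevalE; apply: eq_bigr => mm _.
rewrite rmorphM rmorph_prod /= horner_evalE hornerC; congr (_ * _).
apply: eq_bigr => i _; rewrite rmorphXn /= horner_evalE.
by rewrite hornerD hornerM hornerX !hornerC.
Qed.

Lemma line_semicont m n (P : 'M[{poly K}]_(m, n)) :
  exists s (D : {poly K}), D != 0 /\
    (forall t, (\rank (map_mx (horner_eval t) P) <= s)%N) /\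
    (forall t, D.[t] != 0 -> \rank (map_mx (horner_eval t) P) = s).
Proof.
have [t1 Ht1] := @max_exists K (fun t => \rank (map_mx (horner_eval t) P)) 0 n
   (fun t => rank_leq_col _).
have [f [h Hd]] := minor_exists (map_mx (horner_eval t1) P).
pose D := \det (mxsub f h P).
have DE : forall t, D.[t] = \det (mxsub f h (map_mx (horner_eval t) P)).
  by move=> t; rewrite -horner_evalE -det_map_mx map_mxsub.
exists (\rank (map_mx (horner_eval t1) P)), D; split.
  by apply: contraNneq Hd => D0; rewrite -DE D0 horner0.
split => // t Dt; apply/eqP; rewrite eqn_leq Ht1 /=.
have U : mxsub f h (map_mx (horner_eval t) P) \in unitmx by rewrite unitmxE unitfE -DE.
by rewrite -{1}(mxrank_unit U); apply: mxsub_rank.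
Qed.

End Field.

Lemma nonroot (K : numFieldType) (p : {poly K}) : p != 0 -> exists t, p.[t] != 0.
Proof.
move=> p0; apply: NNPP => H.
have allr : all (root p) [seq i%:R | i <- iota 0 (size p)].
  apply/allP => x _; apply: contraT => Hx; by case: H; exists x.
have U : uniq ([seq i%:R | i <- iota 0 (size p)] : seq K).
  rewrite map_inj_uniq ?iota_uniq //; exact: (mulrIn (@oner_neq0 K)).
by have := max_poly_roots p0 allr U; rewrite size_map size_iota ltnn.
Qed.

Lemma const_rank_of_exact (K : numFieldType) d n m q k (A : symbol K d m n)
  (Q : symbol K d q m) :
  homog_symbol k A ->
  (forall xi, xi != 0 -> im_eq_ker (sym_eval A xi) (sym_eval Q xi)) ->
  forall xi eta, xi != 0 -> eta != 0 ->
    \rank (sym_eval A xi) = \rank (sym_eval A eta).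
Proof.
move=> hA HQ xi eta xi0 eta0.
case: (classic (exists c, eta = c *: xi)) => [[c Ec]|nd].
  have c0 : c != 0 by apply: contraNneq eta0 => c0; rewrite Ec c0 scale0r.
  by rewrite Ec (sym_eval_scale _ _ hA) mxrank_scale_nz // expf_neq0.
pose gam t := xi + t *: (eta - xi).
have gnz : forall t, gam t != 0.
  move=> t; apply/eqP => H0.
  have t0 : t != 0.
    by apply: contraNneq xi0 => t0; move: H0; rewrite /gam t0 scale0r addr0 => ->.
  apply: nd; exists (1 - t^-1); apply/matrixP => i j.
  move/matrixP: H0 => /(_ i j); rewrite !mxE => Hij.
  have -> : eta i j = (1 - t^-1) * xi i j + t^-1 * (xi i j + t * (eta i j - xi i j)).
    by field.
  by rewrite Hij mulr0 addr0.
pose lp := fun p : {mpoly K[d]} =>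
  linepoly p (fun i => xi 0 i) (fun i => eta 0 i - xi 0 i).
have PE : forall m' n' (M : symbol K d m' n') t,
    map_mx (horner_eval t) (map_mx lp M) = sym_eval M (gam t).
  move=> m' n' M t; apply/matrixP => i j; rewrite !mxE horner_evalE linepolyE.
  by apply: meval_eq => l; rewrite !mxE.
have [sA [DA [DA0 [leA eqA]]]] := line_semicont (map_mx lp A).
have [sQ [DQ [DQ0 [leQ eqQ]]]] := line_semicont (map_mx lp Q).
have [t2] := nonroot (mulf_neq0 DA0 DQ0).
rewrite hornerM mulf_eq0 negb_or => /andP [HA2 HQ2].
have sumt : forall t, (\rank (sym_eval A (gam t)) + \rank (sym_eval Q (gam t)))%N = m.
  by move=> t; apply: rank_sum; apply: HQ; apply: gnz.
have sm : (sA + sQ)%N = m by rewrite -(eqA t2 HA2) -(eqQ t2 HQ2) !PE sumt.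
have key : forall t, \rank (sym_eval A (gam t)) = sA.
  move=> t; have := sumt t; have := leQ t; have := leA t; rewrite !PE.
  lia.
have -> : xi = gam 0 by rewrite /gam scale0r addr0.
have -> : eta = gam 1 by rewrite /gam scale1r addrC subrK.
by rewrite !key.
Qed.

Lemma thm_num (K : numFieldType) : theorem2p2_over K.
Proof.
move=> d n m k A hA; split; last by move=> r cr; exact: construct hA cr.
split.
  case=> r cr; have [p [q [B [Q [hB [hQ ex]]]]]] := construct hA cr.
  by exists p, q, (r * k)%N, (r * k)%N, B, Q.
case=> p [q [kB [kQ [B [Q [_ [_ ex]]]]]]].
have HQ : forall xi, xi != 0 -> im_eq_ker (sym_eval A xi) (sym_eval Q xi).
  by move=> xi /ex [].
case: (classic (exists xi0 : 'rV[K]_d, xi0 != 0)) => [[xi0 H0]|N].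
  exists (\rank (sym_eval A xi0)) => xi xn.
  exact: const_rank_of_exact hA HQ xi xi0 xn H0.
by exists 0%N => xi xn; exfalso; apply: N; exists xi.
Qed.

Theorem theorem2p2 (R : realType) :
  theorem2p2_over R /\ theorem2p2_over (R[i])%C.
Proof. split; exact: thm_num. Qed.
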